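(* Let $F$ be a field, $n\ge1$, and $g\in\mathrm{GL}_n(F)$. Suppose that $\lambda\in F$, $\lambda\neq0$, and that $g-\lambda 1$ has rank $r$. Let $\varphi_1,\varphi_2$ be non-negative real numbers with $\varphi_1+\varphi_2=r$. Then: (a) there exist $h,k\in\mathrm{GL}_n(F)$ with $g=hk$ such that $|\mathrm{rk}(h-\lambda1)-\varphi_1|\le2$ and $|\mathrm{rk}(k-1)-\varphi_2|\le2$; (b) if moreover $g\in\mathrm{SL}_n(F)$, then there exist $h,k\in\mathrm{SL}_n(F)$ with $g=hk$ such that $|\mathrm{rk}(h-\lambda1)-\varphi_1|\le3$ and $|\mathrm{rk}(k-1)-\varphi_2|\le3$.
   Context: $1$ denotes the $n\times n$ identity matrix. *)

(* Defs.v *)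
From mathcomp Require Import all_boot all_algebra.
From Stdlib Require Import Reals.
Set Implicit Arguments. Unset Strict Implicit. Unset Printing Implicit Defensive.
Import GRing.Theory.

Definition inGL (F : fieldType) (n : nat) (g : 'M[F]_n) : Prop := g \in unitmx.
Definition inSL (F : fieldType) (n : nat) (g : 'M[F]_n) : Prop :=
  determinant g = GRing.one F.

Definition rkR (F : fieldType) (n : nat) (A : 'M[F]_n) : R := INR (\rank A).

(* Main.v *)
Require Import Defs.
From mathcomp Require Import all_boot all_algebra.
From Stdlib Require Import Reals Lra Classical.
From mathcomp Require Import zify.
Import GRing.Theory.
Local Open Scope ring_scope.

Lemma two_nz (V W1 W2 : zmodType) (f1 : V -> W1) (f2 : V -> W2) :
  (forall a b, f1 (a + b) = f1 a + f1 b) ->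
  (forall a b, f2 (a + b) = f2 a + f2 b) ->
  (exists x, f1 x != 0) -> (exists x, f2 x != 0) ->
  exists x, f1 x != 0 /\ f2 x != 0.
Proof.
move=> a1 a2 [x1 h1] [x2 h2].
have [e2|n2] := eqVneq (f2 x1) 0; last by exists x1.
have [e1|n1] := eqVneq (f1 x2) 0; last by exists x2.
exists (x1 + x2); by rewrite a1 a2 e1 e2 addr0 add0r.
Qed.

Lemma nz_col (F : fieldType) m n (A : 'M[F]_(m, n)) : A != 0 ->
  exists x : 'cV_n, A *m x != 0.
Proof.
move=> nz; apply: NNPP => Hn; case/negP: nz; apply/eqP/matrixP => i j.
have : A *m (delta_mx j 0 : 'cV_n) = 0.
  by apply/eqP; apply: NNPP => H; apply: Hn; exists (delta_mx j 0); apply/negP.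
by rewrite -colE => /matrixP /(_ i 0); rewrite !mxE.
Qed.

Lemma nz_row (F : fieldType) m n (A : 'M[F]_(m, n)) : A != 0 ->
  exists y : 'rV_m, y *m A != 0.
Proof.
move=> nz; apply: NNPP => Hn; case/negP: nz; apply/eqP/matrixP => i j.
have : (delta_mx 0 i : 'rV_m) *m A = 0.
  by apply/eqP; apply: NNPP => H; apply: Hn; exists (delta_mx 0 i); apply/negP.
by rewrite -rowE => /matrixP /(_ 0 j); rewrite !mxE.
Qed.

Lemma mx11_nz (F : fieldType) (S : 'M[F]_1) : S != 0 -> S 0 0 != 0.
Proof.
apply: contra => /eqP e; apply/eqP; rewrite [S]mx11_scalar e.
by apply/matrixP => i j; rewrite !mxE mul0rn.
Qed.

Lemma step (F : fieldType) n (g h : 'M[F]_n) : g \in unitmx -> h \in unitmx ->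
  g - h != 0 -> exists E : 'M_n,
  [/\ leq (\rank E) 1, h + E \in unitmx & leq (\rank (g - h - E)).+1 (\rank (g - h))].
Proof.
move=> ug uh.
set C := g - h => nzC.
set M2 := C *m invmx h *m g.
have nzM2 : M2 != 0.
  apply: contra nzC => /eqP e; apply/eqP.
  by rewrite -[C](mulmxKV uh) -[C *m invmx h](mulmxK ug) -/M2 e !mul0mx.
have [x [hx1 hx2]] : exists x : 'cV_n, C *m x != 0 /\ M2 *m x != 0.
  by apply: two_nz; [move=> ??; exact: mulmxDr | move=> ??; exact: mulmxDr
                    | exact: nz_col | exact: nz_col].
have [y [hy1 hy2]] : exists y : 'rV_n, y *m (C *m x) != 0 /\ y *m (M2 *m x) != 0.
  by apply: two_nz; [move=> ??; exact: mulmxDl | move=> ??; exact: mulmxDl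
                    | exact: nz_row | exact: nz_row].
set a := (y *m (C *m x)) 0 0.
set b := (y *m (M2 *m x)) 0 0.
have a0 : a != 0 by exact: mx11_nz.
have b0 : b != 0 by exact: mx11_nz.
have ea : y *m (C *m x) = a%:M by rewrite [LHS]mx11_scalar.
have eb : y *m (M2 *m x) = b%:M by rewrite [LHS]mx11_scalar.
exists (a^-1 *: (C *m x *m (y *m C))); set u := C *m x. set v := y *m C.
have key : v *m invmx h *m u = (b - a)%:M.
  rewrite raddfB /= -eb -ea /M2 /u /v /C !mulmxA.
  by rewrite [in LHS]mulmxBr (mulmxKV uh) mulmxBl.
have hu : u = C *m x by [].
have hv : v = y *m C by [].
have eyu : y *m u = a%:M by rewrite hu.
clearbody u v.
split.
- have := mxrankM_maxr (a^-1%:M : 'M_n) (u *m v).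
  have := mxrankM_maxl u v; have := rank_leq_col u.
  rewrite mul_scalar_mx => h1 h2 h3; exact: leq_trans h3 (leq_trans h2 h1).
- rewrite -row_free_unit -kermx_eq0.
  set Z := kermx _.
  have HZ : Z *m (h + a^-1 *: (u *m v)) = 0 by apply/eqP; rewrite -sub_kermx.
  clearbody Z.
  set w := Z *m u.
  have hw : w = Z *m u by [].
  clearbody w.
  have eZ : Z *m h = - (a^-1 *: (w *m v)).
    by apply/eqP; rewrite -addr_eq0 -HZ mulmxDr hw -scalemxAr !mulmxA.
  have eZ2 : Z = - (a^-1 *: (w *m v)) *m invmx h by rewrite -eZ mulmxK.
  have w0 : w = 0.
    have H : w = - (a^-1 * (b - a)) *: w.
      rewrite {1}hw {1}eZ2 mulNmx -scalemxAl mulNmx -scalemxAl -!mulmxA (mulmxA v) key.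
      by rewrite mul_mx_scalar scalerA scaleNr.
    have : (1 + a^-1 * (b - a)) *: w = 0.
      by rewrite scalerDl scale1r {1}H scaleNr addNr.
    move/eqP; rewrite scalemx_eq0 => /orP [|/eqP //].
    rewrite mulrBr mulVf // addrC subrK mulf_eq0 invr_eq0 (negbTE a0) /=.
    by rewrite (negbTE b0).
  apply/eqP; rewrite eZ2 w0 mul0mx scaler0 oppr0 mul0mx //.
- clearbody C.
  set K := kermx C.
  have hK : K *m C = 0 by apply/eqP; rewrite -sub_kermx.
  have hKd : K = kermx C by [].
  clearbody K.
  have hyK : ~~ (y <= K)%MS.
    rewrite hKd sub_kermx; apply: contra hy1 => /eqP e.
    by rewrite mulmxA e mul0mx.
  have s1 : (K + y <= kermx (C - a^-1 *: (u *m v)))%MS.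
    rewrite addsmx_sub !sub_kermx !mulmxBr -!scalemxAr !mulmxA hK {1}hu mulmxA hK.
    rewrite !mul0mx scaler0 subr0 eqxx /=.
    by rewrite eyu mul_scalar_mx scalerA mulVf // scale1r -hv subrr.
  have lt : (K < K + y)%MS by rewrite ltmxE addsmxSl addsmx_sub negb_and hyK orbT.
  have r1 := rank_ltmx lt.
  have r2 := mxrankS s1.
  move: r1 r2; rewrite hKd !mxrank_ker.
  have := rank_leq_row C; have := rank_leq_row (C - a^-1 *: (u *m v)).
  move: (\rank C) (\rank (C - _)) (\rank (kermx C + y)) => p q s. lia.
Qed.

Section RealPart.
Local Open Scope R_scope.

Lemma INR_addn (m k : nat) : INR (addn m k) = INR m + INR k.
Proof. exact: plus_INR. Qed.

Lemma leINR (m k : nat) : leq m k -> INR m <= INR k.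
Proof. by move/leP; apply: le_INR. Qed.

Lemma pick_t (r : nat) (p : R) : 0 <= p -> p <= INR r ->
  exists t, leq t r /\ -1 <= INR t - p <= 1.
Proof.
elim: r => [|r IH] h0 h1.
  by exists 0%nat; split => //; simpl in *; lra.
have [le|lt] := Rle_lt_dec p (INR r).
  by have [t [tr ht]] := IH h0 le; exists t; split => //; exact: leqW.
exists r.+1; split => //; rewrite S_INR in h1 *; lra.
Qed.

Lemma fin (t r a b c m : nat) (p1 p2 : R) :
  -1 <= INR t - p1 <= 1 -> p1 + p2 = INR r ->
  leq a (addn t c) -> leq (addn b t) (addn r c) -> leq r (addn a b) ->
  leq (addn c 1) m ->
  Rabs (INR a - p1) <= INR m /\ Rabs (INR b - p2) <= INR m.
Proof.
move=> ht hp /leINR h1 /leINR h2 /leINR h3 /leINR h4.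
rewrite !INR_addn in h1 h2 h3 h4.
simpl INR in h4.
split; apply: Rabs_le; lra.
Qed.

End RealPart.

Lemma core (F : fieldType) n (g : 'M[F]_n) (lam : F) : g \in unitmx -> lam != 0 ->
  forall t, leq t (\rank (g - lam%:M)) -> exists h : 'M_n,
  [/\ h \in unitmx, leq (\rank (h - lam%:M)) t &
      leq (addn (\rank (g - h)) t) (\rank (g - lam%:M))].
Proof.
move=> ug l0; set r := \rank _.
elim=> [_|t IH ht].
  exists lam%:M; split.
  - by rewrite unitmxE det_scalar unitfE expf_neq0.
  - by rewrite subrr mxrank0.
  - by rewrite addn0.
have [h [uh hr1 hr2]] := IH (ltnW ht).
have hsum : leq r (addn (\rank (g - h)) (\rank (h - lam%:M))).
  have e : g - lam%:M = (g - h) + (h - lam%:M) by rewrite addrA subrK.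
  by rewrite /r e; exact: mxrank_add.
have nzC : g - h != 0.
  rewrite -mxrank_eq0; apply/eqP => e; move: hsum hr1 ht; rewrite e.
  move: (\rank (h - lam%:M)) => q; lia.
have [E [rE uE rC]] := @step _ _ _ _ ug uh nzC.
exists (h + E); split => //.
- have e : h + E - lam%:M = (h - lam%:M) + E by rewrite addrAC.
  rewrite e; apply: leq_trans (mxrank_add _ _) _.
  move: rE hr1; move: (\rank E) (\rank (h - lam%:M)) => p q; lia.
- have e : g - (h + E) = g - h - E by rewrite opprD addrA.
  rewrite e; move: rC hr2; move: (\rank (g - h - E)) (\rank (g - h)) => p q; lia.
Qed.

Lemma rank_k (F : fieldType) n (g h : 'M[F]_n) : h \in unitmx ->
  \rank (invmx h *m g - 1%:M) = \rank (g - h).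
Proof.
move=> uh.
have e : invmx h *m g - 1%:M = invmx h *m (g - h) by rewrite mulmxBr mulVmx.
rewrite e; apply/eqP; rewrite eqn_leq mxrankM_maxr /=.
by rewrite -{1}[g - h](mulKVmx uh) mxrankM_maxr.
Qed.

Lemma rank_pert (F : fieldType) n (h D : 'M[F]_n) (c : F) :
  leq (\rank D) 1 -> leq (\rank (h *m (c *: D))) 1.
Proof.
move=> hD; apply: leq_trans (mxrankM_maxr _ _) _.
rewrite -mul_scalar_mx; exact: leq_trans (mxrankM_maxr _ _) hD.
Qed.

Theorem lemma2p3 (F : fieldType) (n : nat) (g : 'M[F]_n) (lam : F)
  (r : nat) (phi1 phi2 : R) :
  leq 1 n -> inGL g -> lam != 0 ->
  \rank (g - lam%:M) = r ->
  Rle R0 phi1 -> Rle R0 phi2 -> Rplus phi1 phi2 = INR r ->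
  (exists h k : 'M[F]_n, [/\ inGL h, inGL k, g = h *m k,
     Rle (Rabs (Rminus (rkR (h - lam%:M)) phi1)) (INR 2) &
     Rle (Rabs (Rminus (rkR (k - 1%:M)) phi2)) (INR 2)]) /\
  (inSL g ->
   exists h k : 'M[F]_n, [/\ inSL h, inSL k, g = h *m k,
     Rle (Rabs (Rminus (rkR (h - lam%:M)) phi1)) (INR 3) &
     Rle (Rabs (Rminus (rkR (k - 1%:M)) phi2)) (INR 3)]).
Proof.
move=> n1 uG l0 hr p1 p2 hp.
have p1r : Rle phi1 (INR r) by rewrite -hp; lra.
have [t [tr ht]] := @pick_t _ _ p1 p1r.
have [h [uh r1 r2]] := @core _ _ g lam uG l0 t ltac:(by rewrite hr).
rewrite hr in r2.
have hsum : leq r (addn (\rank (g - h)) (\rank (h - lam%:M))).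
  have e : g - lam%:M = (g - h) + (h - lam%:M) by rewrite addrA subrK.
  by rewrite -hr e; exact: mxrank_add.
split.
  exists h, (invmx h *m g); split => //.
  - by rewrite /inGL unitmx_mul unitmx_inv uh.
  - by rewrite mulKVmx.
  - have [H _] := @fin t r (\rank (h - lam%:M)) (\rank (g - h)) 0 2 phi1 phi2 ht hp
      ltac:(by rewrite addn0) ltac:(by rewrite addn0) ltac:(by rewrite addnC) isT.
    exact: H.
  - have [_ H] := @fin t r (\rank (h - lam%:M)) (\rank (g - h)) 0 2 phi1 phi2 ht hp
      ltac:(by rewrite addn0) ltac:(by rewrite addn0) ltac:(by rewrite addnC) isT.
    by rewrite /rkR rank_k.
move=> sg.
pose i0 : 'I_n := Ordinal n1.
set d := \det h.
have d0 : d != 0 by move: uh; rewrite unitmxE unitfE.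
pose c := d^-1 - 1.
pose s : 'M[F]_n := 1%:M + c *: delta_mx i0 i0.
have es : s = diag_mx (\row_j (if j == i0 then d^-1 else 1)).
  apply/matrixP => i j; rewrite !mxE.
  have [<-|ne] := eqVneq i j.
    rewrite andbb mulr1n; case: (i == i0) => /=; rewrite ?mulr1 ?mulr0.
      by rewrite /c addrC subrK.
    by rewrite addr0.
  rewrite mulr0n add0r.
  have [ei|ni] := eqVneq i i0; last by rewrite /= mulr0.
  have [ej|nj] := eqVneq j i0; last by rewrite andbF /= mulr0.
  by move: ne; rewrite ei ej eqxx.
have ds : \det s = d^-1.
  rewrite es det_diag (bigD1 i0) //= big1 ?mulr1; first by rewrite mxE eqxx.
  by move=> j /negbTE nj; rewrite mxE nj.
set h' := h *m s.
have dh' : \det h' = 1 by rewrite det_mulmx ds -/d mulfV.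
have uh' : h' \in unitmx by rewrite unitmxE dh' unitr1.
have rD : leq (\rank (delta_mx i0 i0 : 'M[F]_n)) 1 by rewrite mxrank_delta.
have ra : leq (\rank (h' - lam%:M)) (addn (\rank (h - lam%:M)) 1).
  have e : h' - lam%:M = (h - lam%:M) + h *m (c *: delta_mx i0 i0).
    by rewrite /h' /s mulmxDr mulmx1 addrAC.
  rewrite e; apply: leq_trans (mxrank_add _ _) _; rewrite leq_add2l.
  exact: rank_pert.
have rb : leq (\rank (g - h')) (addn (\rank (g - h)) 1).
  have e : g - h' = (g - h) + h *m ((- c) *: delta_mx i0 i0).
    by rewrite /h' /s mulmxDr mulmx1 scaleNr mulmxN opprD addrA.
  rewrite e; apply: leq_trans (mxrank_add _ _) _; rewrite leq_add2l.
  exact: rank_pert.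
have hsum' : leq r (addn (\rank (h' - lam%:M)) (\rank (g - h'))).
  have e : g - lam%:M = (h' - lam%:M) + (g - h') by rewrite [RHS]addrC addrA subrK.
  by rewrite -hr e; exact: mxrank_add.
have ra' : leq (\rank (h' - lam%:M)) (addn t 1).
  by apply: leq_trans ra _; rewrite leq_add2r.
have rb' : leq (addn (\rank (g - h')) t) (addn r 1).
  by move: rb r2; move: (\rank (g - h')) (\rank (g - h)) => p q; lia.
have [H1 H2] := @fin t r (\rank (h' - lam%:M)) (\rank (g - h')) 1 3 phi1 phi2 ht hp
  ra' rb'
  hsum' isT.
exists h', (invmx h' *m g); split => //.
- by rewrite /inSL det_mulmx det_inv dh' invr1 mul1r.
- by rewrite mulKVmx.
- by rewrite /rkR rank_k.
Qed.
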